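(* Let $S$ be a non-empty finite set of strings and run the algorithm Greedy-R on $S$. After the initial call to Make-Reverse-Factor-Free, the current set $S$ remains reverse-factor-free after each iteration of the while loop.
   Context: For strings $x,y$, $\mathit{ov}(x,y)$ is the length of the longest suffix of $x$ that is also a prefix of $y$; $\mathrm{pref}(x,y)$ is $x$ with its suffix of length $\mathit{ov}(x,y)$ removed, and $x\otimes y=\mathrm{pref}(x,y)\,y$. $x^R$ denotes the reversal of $x$. For a set $X$ of strings, $\widetilde{X}=X\cup\{x^R:x\in X\}$. A set $X$ is reverse-factor-free if there are no distinct $x,y\in X$ such that $x$ is a factor of $y$ or of $y^R$. The procedure Make-Reverse-Factor-Free$(X)$ repeatedly removes from the current set a string $x$ for which some other string $y\neq x$ of the current set has $x$ as a factor of $y$ or of $y^R$, until no such string remains. Algorithm Greedy-R$(S)$: first set $S:=$ Make-Reverse-Factor-Free$(S)$. Then, while $|S|>1$: among all pairs $(u,v)$ with $u,v\in\widetilde{S}$ and $u\notin\{v,v^R\}$, choose one with maximal $\mathit{ov}(u,v)$ (ties broken arbitrarily); set $S:=S\cup\{u\otimes v\}$ and then remove from $S$ all of $u,v,u^R,v^R$ that belong to $S$. Return the only element of $S$. *)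

(* Defs.v *)
From HB Require Import structures.
From mathcomp Require Import all_boot finmap.
Set Implicit Arguments.
Unset Strict Implicit.
Unset Printing Implicit Defensive.
Local Open Scope fset_scope.

Section Strings.
Variable T : choiceType.
Implicit Types x y u v : seq T.
Implicit Types X : {fset seq T}.

Definition factor x y : bool := infix x y.

(* ov(x,y): length of the longest suffix of x that is also a prefix of y *)
Definition ov x y : nat :=
  \max_(k < (minn (size x) (size y)).+1 | drop (size x - k) x == take k y) k.

Definition pref x y : seq T := take (size x - ov x y) x.

Definition otimes x y : seq T := pref x y ++ y.

Definition tilde X : {fset seq T} := X `|` [fset rev x | x in X].

Definition rff X : Prop :=
  forall x y, x \in X -> y \in X -> x != y -> ~~ factor x y /\ ~~ factor x (rev y).

Definition mrff_step X X' : Prop :=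
  exists x y, [/\ x \in X, y \in X, y != x, factor x y || factor x (rev y)
                & X' = X `\ x].

Inductive rtc (R : {fset seq T} -> {fset seq T} -> Prop) :
    {fset seq T} -> {fset seq T} -> Prop :=
| rtc_refl X : rtc R X X
| rtc_step X Y Z : R X Y -> rtc R Y Z -> rtc R X Z.

(* X is a possible output of Make-Reverse-Factor-Free(X0):
   removal steps are repeated until no removable string remains *)
Definition mrff_run X0 X : Prop :=
  rtc mrff_step X0 X /\
  ~ (exists x y, [/\ x \in X, y \in X, y != x & factor x y || factor x (rev y)]).

(* one iteration of the while loop of Greedy-R (ties broken arbitrarily) *)
Definition greedy_step X X' : Prop :=
  1 < #|` X| /\
  exists u v, [/\ u \in tilde X, v \in tilde X, u != v /\ u != rev v,
     (forall u' v', u' \in tilde X -> v' \in tilde X -> u' != v' -> u' != rev v' ->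
        ov u' v' <= ov u v)
   & X' = (X `|` [fset otimes u v]) `\` [fset u; v; rev u; rev v]].

End Strings.

(* Main.v *)
Require Import Defs.
From HB Require Import structures.
From mathcomp Require Import all_boot finmap.
From mathcomp Require Import zify.
Local Open Scope fset_scope.

Section Aux.
Variable T : choiceType.
Implicit Types x y u v w : seq T.

Lemma ov_spec x y : ov x y <= minn (size x) (size y) /\
  drop (size x - ov x y) x = take (ov x y) y.
Proof.
rewrite /ov (bigmax_eq_arg ord0) /=; last by rewrite subn0 drop_size take0.
case: arg_maxnP => /=; first by rewrite subn0 drop_size take0.
move=> i /eqP Pi _; split => //; by rewrite -ltnS ltn_ord.
Qed.

Lemma ov_ge x y j : j <= minn (size x) (size y) ->
  drop (size x - j) x = take j y -> j <= ov x y.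
Proof.
move=> hj he; rewrite /ov.
have hj' : j < (minn (size x) (size y)).+1 by [].
by apply: (bigmax_sup (Ordinal hj')) => //=; apply/eqP.
Qed.

Lemma otimes_eq u v : otimes u v = u ++ drop (ov u v) v.
Proof.
case: (ov_spec u v) => hk D.
rewrite /otimes /pref; move: D; set k := ov u v => D.
rewrite -{1}(cat_take_drop k v) -D catA cat_take_drop //.

Qed.

Lemma straddle u v y : infix y (otimes u v) -> ~~ infix y u -> ~~ infix y v ->
  ov u v < ov u y.
Proof.
case: (ov_spec u v) => hk D.
set k := ov u v in hk D *.
have hw1 : otimes u v = take (size u - k) u ++ v by [].
have hw2 := otimes_eq u v; rewrite -/k in hw2.
set w := otimes u v in hw1 hw2 *.
have hku : k <= size u by move: hk; rewrite leq_min => /andP[].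
have sP : size (take (size u - k) u) = size u - k by rewrite size_takel // leq_subr.
have Hu : take (size u) w = u by rewrite hw2 take_size_cat.
move=> /infixP [p [s hws]] nu nv.
have Hp : drop (size p) w = y ++ s by rewrite hws drop_size_cat.
case: (leqP (size p + size y) (size u)) => hA.
  case/negP: nu.
  have -> : u = take (size u) w by rewrite Hu.
  apply: (@infix_trans _ (take (size p + size y) w)).
    by rewrite hws catA take_size_cat ?size_cat // suffix_infix.
  by rewrite -(take_takel _ hA) infix_take.
case: (leqP (size u - k) (size p)) => hB.
  case/negP: nv.
  have -> : v = drop (size u - k) w by rewrite hw1 drop_size_cat.
  apply: (@infix_trans _ (drop (size p) w)); first by rewrite Hp prefix_infix.
  by rewrite -(subnK hB) -drop_drop infix_drop.
set j := size u - size p.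
have hpu : size p <= size u by lia.
apply: (@leq_trans j); first by lia.
apply: ov_ge; first by rewrite leq_min; apply/andP; split; lia.
have -> : size u - j = size p by lia.
have e1 : take j (drop (size p) w) = drop (size p) (take (j + size p) w).
  by rewrite take_drop.
have ejp : (j + size p)%N = size u by lia.
rewrite ejp in e1.
rewrite Hu in e1; rewrite -e1 Hp takel_cat //; lia.
Qed.

Lemma tilde_rev (X : {fset seq T}) a : a \in tilde X -> rev a \in tilde X.
Proof.
rewrite /tilde !inE => /orP [ha|/imfsetP [z /= hz ->]].
  by apply/orP; right; apply/imfsetP; exists a.
by rewrite revK hz.
Qed.

Lemma L1 (X : {fset seq T}) x a : rff X -> x \in X -> a \in tilde X ->
  x != a -> x != rev a -> ~~ infix x a /\ ~~ infix a x.
Proof.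
move=> hr hx; rewrite /tilde !inE => /orP [ha|/imfsetP [z /= hz ->]] n1 n2.
  split; first by case: (hr x a hx ha n1).
  by case: (hr a x ha hx); rewrite // eq_sym.
rewrite revK in n2; split; first by case: (hr x z hx hz n2).
rewrite infix_revLR; by case: (hr z x hz hx); rewrite // eq_sym.
Qed.

Lemma step_rff (X X' : {fset seq T}) : rff X -> greedy_step X X' -> rff X'.
Proof.
move=> hr [_ [u [v [hu hv [nuv nurv] hmax ->]]]].
set w := otimes u v.
have hin : forall z, z \in (X `|` [fset w]) `\` [fset u; v; rev u; rev v] ->
    [/\ z != u, z != v, z != rev u, z != rev v & (z \in X) || (z == w)].
  move=> z; rewrite !inE !negb_or -!andbA => /and5P [a b c d e].
  by split.
have Kx : forall x, x \in X -> x != u -> x != v -> x != rev u -> x != rev v ->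
    ~~ infix x w /\ ~~ infix (rev x) w /\ ~~ infix w x /\ ~~ infix w (rev x).
  move=> x hx n1 n2 n3 n4.
  have hrx : rev x \in tilde X by apply: tilde_rev; rewrite /tilde inE hx.
  have hxt : x \in tilde X by rewrite /tilde inE hx.
  have gen : forall z, z \in tilde X -> u != z -> u != rev z ->
      ~~ infix z u -> ~~ infix z v -> ~~ infix z w.
    move=> z hz m1 m2 a b; apply/negP => hzw.
    have := @straddle u v z hzw a b; have := hmax u z hu hz m1 m2.
    by move=> h1 h2; move: (leq_trans h2 h1); rewrite ltnn.
  have revne : forall a b : seq T, a != rev b -> rev a != b.
    by move=> a b; apply: contra => /eqP <-; rewrite revK.
  have uw : infix u w by rewrite /w otimes_eq prefix_infix.
  have [i1 i2] := @L1 X x u hr hx hu n1 n3.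
  have [i3 i4] := @L1 X x v hr hx hv n2 n4.
  have [i5 i6] := @L1 X x (rev u) hr hx (@tilde_rev X u hu) n3 ltac:(by rewrite revK).
  have [i7 i8] := @L1 X x (rev v) hr hx (@tilde_rev X v hv) n4 ltac:(by rewrite revK).
  have e1 : u != x by rewrite eq_sym.
  have e2 : u != rev x by rewrite eq_sym; apply: revne.
  split; first by apply: gen.
  split.
    apply: gen => //.
    - by rewrite revK.
    - by rewrite infix_revLR.
    - by rewrite infix_revLR.
  split; apply/negP => h.
    by move/negP: i2; apply; exact: infix_trans uw h.
  move/negP: i6; apply; rewrite infix_revLR; exact: infix_trans uw h.
move=> x y hx hy nxy.
case: (hin x hx) => a1 a2 a3 a4 /orP [x1|/eqP xw];
case: (hin y hy) => b1 b2 b3 b4 /orP [y1|/eqP yw].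
- exact: hr.
- rewrite /factor yw -infix_revLR.
  by case: (Kx x x1 a1 a2 a3 a4) => [-> [-> _]].
- rewrite /factor xw.
  by case: (Kx y y1 b1 b2 b3 b4) => [_ [_ [-> ->]]].
- by move: nxy; rewrite xw yw eqxx.
Qed.

End Aux.

Theorem lemma1 (T : choiceType) (S0 S : {fset seq T}) :
  S0 != fset0 -> mrff_run S0 S ->
  forall S' : {fset seq T}, rtc (@greedy_step T) S S' -> rff S'.
Proof.
move=> _ [_ hn] S' h.
have hS : rff S.
  move=> x y hx hy nxy.
  by split; apply/negP => hf; apply: hn; exists x, y; split; rewrite // ?(eq_sym y x) ?hf ?orbT.
elim: h hS => // X Y Z hst _ IH hX.
by apply: IH; apply: (@step_rff T X Y hX hst).
Qed.
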